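(* Let $f$ and $g$ be full-branch Markov maps on $[-1,1]$ which both satisfy the partition spacing condition (P). Suppose in addition that $f$ has bounded distortion with constant $C^{(f)}_1$ and that $g$ has uniform expansion parameter $\lambda^{(g)}=\inf|g'|>0$. Then $g\circ f$ satisfies (P).
   Context: A full-branch Markov map of $[-1,1]$ has disjoint open branch intervals $\mathcal{O}_\iota$, $\iota\in I$ ($I$ countable), covering $[-1,1]$ up to a countable set, with $f|_{\mathcal{O}_\iota}$ extending to a $C^2$ bijection $\hat f_\iota:\overline{\mathcal{O}_\iota}\to[-1,1]$; $v_\iota=\hat f_\iota^{-1}$. Bounded distortion: $C_1=\sup_{\iota,x}|v_\iota''(x)/v_\iota'(x)|<\infty$. Partition spacing condition (P): $\Xi:=\sup\{|\mathcal{O}_\iota|/d(\mathcal{O}_\iota,\sigma):\iota\in I,\ \sigma\in\{-1,1\},\ \sigma\notin\overline{\mathcal{O}_\iota}\}<\infty$. The branch intervals of $g\circ f$ are the interiors of $v^{(f)}_\phi(v^{(g)}_\gamma([-1,1]))$ over pairs of branches $\phi$ of $f$ and $\gamma$ of $g$. *)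

(* Defs.v *)
From Stdlib Require Import Reals.
From Coquelicot Require Import Coquelicot.
Open Scope R_scope.

Definition set_closure (S : R -> Prop) (x : R) : Prop :=
  forall eps : R, 0 < eps -> exists z, S z /\ Rabs (z - x) < eps.

Definition set_interior (S : R -> Prop) (x : R) : Prop :=
  exists eps : R, 0 < eps /\ forall y, Rabs (y - x) < eps -> S y.

Definition branch_interval (a b : R) : R -> Prop := fun x => a < x < b.

(* h is C^2 on R (a C^2 function on a closed interval is exactly the
   restriction of a C^2 function on R). *)
Definition C2 (h : R -> R) : Prop :=
  (forall x, ex_derive h x) /\
  (forall x, ex_derive (Derive h) x) /\
  (forall x, continuous (Derive (Derive h)) x).

(* Full-branch Markov map of [-1,1]:
   branch intervals O_i = (a i, b i), i in a countable index type I;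
   fhat i : C^2 extension of f|O_i, a bijection [a i, b i] -> [-1,1];
   v i    : its inverse branch v_i = (fhat i)^{-1} on [-1,1]. *)
Definition FBM (I : Type) (a b : I -> R) (f : R -> R)
    (fhat v : I -> R -> R) : Prop :=
  (exists enc : I -> nat, forall i j, enc i = enc j -> i = j) /\
  (forall i, -1 <= a i /\ a i < b i /\ b i <= 1) /\
  (forall i j x, a i < x < b i -> a j < x < b j -> i = j) /\
  (exists e : nat -> R, forall x, -1 <= x <= 1 ->
      (exists i, a i < x < b i) \/ (exists n, e n = x)) /\
  (forall i, C2 (fhat i)) /\
  (forall i x, a i < x < b i -> fhat i x = f x) /\
  (forall i x, a i <= x <= b i -> -1 <= fhat i x <= 1) /\
  (forall i x y, a i <= x <= b i -> a i <= y <= b i ->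
      fhat i x = fhat i y -> x = y) /\
  (forall i y, -1 <= y <= 1 ->
      a i <= v i y <= b i /\ fhat i (v i y) = y).

(* Bounded distortion: C1 = sup_{i,x} |v_i''(x) / v_i'(x)| < oo
   (sup taken over x in (-1,1); by continuity this is the same sup as over [-1,1]). *)
Definition bounded_distortion (I : Type) (v : I -> R -> R) : Prop :=
  exists C1 : R, forall i y, -1 < y < 1 ->
    ex_derive (v i) y /\ ex_derive (Derive (v i)) y /\
    Derive (v i) y <> 0 /\
    Rabs (Derive (Derive (v i)) y / Derive (v i) y) <= C1.

Definition uniformly_expanding (I : Type) (a b : I -> R) (g : R -> R) : Prop :=
  exists lam : R, 0 < lam /\ forall i x, a i < x < b i ->
    ex_derive g x /\ lam <= Rabs (Derive g x).

(* Partition spacing condition (P) for a family of (branch) sets O j: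
   sup { |O_j| / d(O_j, sigma) : sigma in {-1,1}, sigma not in set_closure O_j } < oo,
   with |O_j| = sup_{x,y in O_j} |x-y| and d(O_j,sigma) = inf_{z in O_j} |z - sigma|;
   |O| <= Xi d(O,sigma) is written out as forall x y z in O, |x-y| <= Xi |z-sigma|. *)
Definition spacing_P (J : Type) (O : J -> R -> Prop) : Prop :=
  exists Xi : R, forall j sigma, (sigma = -1 \/ sigma = 1) ->
    ~ set_closure (O j) sigma ->
    forall x y z, O j x -> O j y -> O j z ->
      Rabs (x - y) <= Xi * Rabs (z - sigma).

(* Branch intervals of g o f: interiors of v^f_phi (v^g_gamma ([-1,1])). *)
Definition comp_branches (If Ig : Type) (vf : If -> R -> R) (vg : Ig -> R -> R)
    : (If * Ig) -> R -> Prop :=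
  fun p => set_interior (fun x => exists y, -1 <= y <= 1 /\
                                 x = vf (fst p) (vg (snd p) y)).

(* Main.v *)
Require Import Defs.
From Stdlib Require Import Reals Lra Psatz Classical.
From Coquelicot Require Import Coquelicot.
Open Scope R_scope.

Lemma lim0 (D M : R) : (forall eta, 0 < eta < 1 -> D <= eta * M) -> D <= 0.
Proof.
  intros H. destruct (Rle_or_lt D 0) as [h|h]; [exact h|].
  exfalso. assert (HM : 0 < M) by (specialize (H (/2) ltac:(lra)); lra).
  set (eta := Rmin (/2) (D / (2*M))).
  assert (h1 : 0 < D / (2*M)) by (apply Rdiv_lt_0_compat; lra).
  assert (he : 0 < eta < 1) by (unfold eta; split; [apply Rmin_glb_lt; lra| eapply Rle_lt_trans; [apply Rmin_l| lra]]).
  specialize (H eta he).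
  assert (eta * M <= D / (2*M) * M) by (apply Rmult_le_compat_r; [lra| apply Rmin_r]).
  assert (D / (2*M) * M = D/2) by (field; lra). lra.
Qed.

Lemma spc_closed_ext (a b K sg : R) : a < b ->
  (forall x y z, a < x < b -> a < y < b -> a < z < b -> Rabs (x - y) <= K * Rabs (z - sg)) ->
  forall x y z, a <= x <= b -> a <= y <= b -> a <= z <= b ->
    Rabs (x - y) <= Rabs K * Rabs (z - sg).
Proof.
  intros hab H x y z hx hy hz.
  cut (Rabs (x - y) - Rabs K * Rabs (z - sg) <= 0); [lra|].
  apply (lim0 _ (Rabs (x - y) + Rabs K * (b - a))). intros eta he.
  set (m0 := (a + b) / 2).
  set (x' := x + eta * (m0 - x)). set (y' := y + eta * (m0 - y)). set (z' := z + eta * (m0 - z)).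
  assert (hin : forall w, a <= w <= b -> a < w + eta * (m0 - w) < b).
  { intros w hw. unfold m0. split; nra. }
  specialize (H x' y' z' (hin x hx) (hin y hy) (hin z hz)).
  assert (e1 : x' - y' = (1 - eta) * (x - y)) by (unfold x', y'; ring).
  rewrite e1, Rabs_mult, (Rabs_pos_eq (1 - eta)) in H by lra.
  assert (e2 : z' - sg = (z - sg) + eta * (m0 - z)) by (unfold z'; ring).
  assert (h2 : Rabs (z' - sg) <= Rabs (z - sg) + eta * (b - a)).
  { rewrite e2. eapply Rle_trans; [apply Rabs_triang|].
    rewrite Rabs_mult, (Rabs_pos_eq eta) by lra. apply Rplus_le_compat_l.
    apply Rmult_le_compat_l; [lra|]. unfold m0. apply Rabs_le. lra. }
  assert (h3 : K * Rabs (z' - sg) <= Rabs K * (Rabs (z - sg) + eta * (b - a))).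
  { eapply Rle_trans; [apply Rle_abs|]. rewrite Rabs_mult, Rabs_Rabsolu.
    apply Rmult_le_compat_l; [apply Rabs_pos| exact h2]. }
  assert (0 <= Rabs K) by apply Rabs_pos.
  assert (0 <= Rabs (x - y)) by apply Rabs_pos.
  nra.
Qed.

Lemma near_avoid (O : R -> Prop) x p1 p2 eta :
  (exists e, 0 < e /\ forall y, Rabs (y - x) < e -> O y) -> 0 < eta ->
  exists x', O x' /\ Rabs (x' - x) < eta /\ x' <> p1 /\ x' <> p2.
Proof.
  intros [e [he H]] heta.
  set (h := Rmin e eta / 2).
  assert (hh : 0 < h /\ h < e /\ h < eta) by (unfold h; pose proof (Rmin_l e eta); pose proof (Rmin_r e eta); assert (0 < Rmin e eta) by (apply Rmin_glb_lt; lra); lra).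
  assert (HO : forall k, 0 < k <= h -> O (x + k) /\ Rabs (x + k - x) < eta).
  { intros k hk. replace (x + k - x) with k by ring. rewrite Rabs_pos_eq by lra.
    split; [apply H; replace (x + k - x) with k by ring; rewrite Rabs_pos_eq by lra|]; lra. }
  assert (G : forall k, 0 < k <= h -> x + k <> p1 -> x + k <> p2 ->
     exists x', O x' /\ Rabs (x' - x) < eta /\ x' <> p1 /\ x' <> p2).
  { intros k hk h1 h2. exists (x + k). destruct (HO k hk). repeat split; auto. }
  destruct (Req_dec (x + h) p1) as [a1|a1]; [|destruct (Req_dec (x + h) p2) as [a2|a2]; [|apply (G h); auto; lra]].
  - destruct (Req_dec (x + h/2) p2) as [b2|b2]; [|apply (G (h/2)); auto; lra].
    destruct (Req_dec (x + h/4) p1) as [c1|c1]; [lra|].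
    destruct (Req_dec (x + h/4) p2) as [c2|c2]; [lra|apply (G (h/4)); auto; lra].
  - destruct (Req_dec (x + h/2) p1) as [b1|b1]; [|apply (G (h/2)); auto; lra].
    destruct (Req_dec (x + h/4) p1) as [c1|c1]; [lra|].
    destruct (Req_dec (x + h/4) p2) as [c2|c2]; [lra|apply (G (h/4)); auto; lra].
Qed.

Lemma avoid_ineq (O : R -> Prop) p1 p2 K sg : 0 <= K ->
  (forall x, O x -> exists e, 0 < e /\ forall y, Rabs (y - x) < e -> O y) ->
  (forall x y z, O x -> O y -> O z -> x <> p1 -> x <> p2 -> y <> p1 -> y <> p2 ->
     z <> p1 -> z <> p2 -> Rabs (x - y) <= K * Rabs (z - sg)) ->
  forall x y z, O x -> O y -> O z -> Rabs (x - y) <= K * Rabs (z - sg).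
Proof.
  intros hK Hop H x y z hx hy hz.
  cut (Rabs (x - y) - K * Rabs (z - sg) <= 0); [lra|].
  apply (lim0 _ (2 + K)). intros eta he.
  destruct (near_avoid O x p1 p2 eta (Hop x hx) ltac:(lra)) as [x' [ox [dx [x1 x2]]]].
  destruct (near_avoid O y p1 p2 eta (Hop y hy) ltac:(lra)) as [y' [oy [dy [y1 y2]]]].
  destruct (near_avoid O z p1 p2 eta (Hop z hz) ltac:(lra)) as [z' [oz [dz [z1 z2]]]].
  specialize (H x' y' z' ox oy oz x1 x2 y1 y2 z1 z2).
  assert (Rabs (x - y) <= Rabs (x' - y') + 2 * eta).
  { replace (x - y) with ((x' - y') + (-(x' - x)) + (y' - y)) by ring.
    eapply Rle_trans; [apply Rabs_triang|].
    eapply Rle_trans; [apply Rplus_le_compat_r; apply Rabs_triang|].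
    rewrite Rabs_Ropp. lra. }
  assert (Rabs (z' - sg) <= Rabs (z - sg) + eta).
  { replace (z' - sg) with ((z - sg) + (z' - z)) by ring.
    eapply Rle_trans; [apply Rabs_triang|]. lra. }
  nra.
Qed.

Lemma core (V : R -> R) (b c d m E Xg : R) (O : R -> Prop) :
  -1 <= c -> c < d -> d <= 1 ->
  (forall y, -1 <= y <= 1 -> -1 <= V y <= b) ->
  (forall x, -1 <= x <= b -> exists w, -1 <= w <= 1 /\ V w = x) ->
  0 < m -> 0 <= E ->
  (forall w u, -1 < w -> w < u -> u < 1 -> m * (u - w) <= V u - V w <= E * m * (u - w)) ->
  0 <= Xg ->
  (-1 < c -> forall s t u, c <= s <= d -> c <= t <= d -> c <= u <= d ->
      Rabs (s - t) <= Xg * (u + 1)) ->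
  (forall x, O x -> exists s, c <= s <= d /\ x = V s) ->
  (forall x, O x -> exists e, 0 < e /\ forall y, Rabs (y - x) < e -> O y) ->
  (forall p q, (forall x, p < x < q -> exists s, c <= s <= d /\ x = V s) ->
      forall x, p < x < q -> O x) ->
  (exists e0, 0 < e0 /\ forall z, O z -> e0 <= Rabs (z + 1)) ->
  forall x y z, O x -> O y -> O z -> Rabs (x - y) <= E * Xg * Rabs (z + 1).
Proof.
  intros hc hcd hd Hr Hs hm hE Hl hX Hg HOS Hop HSO [e0 [he0 Hfar]].
  assert (hc' : -1 < c).
  { destruct (Rle_lt_or_eq_dec _ _ hc) as [h|h]; [exact h|]. exfalso. subst c.
    set (c0 := (-1 + d) / 2).
    assert (Vc0 : -1 < V c0).
    { pose proof (Hl ((-1 + c0)/2) c0 ltac:(unfold c0; lra) ltac:(unfold c0; lra) ltac:(unfold c0; lra)).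
      pose proof (Hr ((-1 + c0)/2) ltac:(unfold c0; lra)).
      assert (0 < m * (c0 - (-1 + c0) / 2)) by (apply Rmult_lt_0_compat; unfold c0; lra). lra. }
    assert (Hrr : exists r, -1 < r /\ r <= V c0 /\ forall x, -1 < x < r -> x <> V 1).
    { destruct (classic (-1 < V 1 < V c0)) as [h1|h1].
      - exists (V 1). split; [lra|split; [lra|]]. intros x hx. lra.
      - exists (V c0). split; [lra|split; [lra|]]. intros x hx e. subst x. apply h1. lra. }
    destruct Hrr as [r [hr1 [hr2 hr3]]].
    assert (Hin : forall x, -1 < x < r -> O x).
    { apply HSO. intros x hx.
      assert (Vb : V c0 <= b) by (apply (Hr c0); unfold c0; lra).
      destruct (Hs x ltac:(lra)) as [w [hw e]].
      assert (w <> 1) by (intro; subst w; apply (hr3 x hx); auto).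
      destruct (Req_dec w (-1)) as [h1|h1].
      - exists w. split; [lra|auto].
      - exists w. split; [|auto]. split; [lra|].
        destruct (Rlt_or_le w c0) as [h2|h2]; [unfold c0 in h2; lra|].
        exfalso. destruct (Req_dec w c0) as [h3|h3].
        + subst w. lra.
        + pose proof (Hl c0 w ltac:(unfold c0; lra) ltac:(lra) ltac:(lra)).
          assert (0 < m * (w - c0)) by (apply Rmult_lt_0_compat; lra). lra. }
    set (z := -1 + Rmin e0 (r + 1) / 2).
    assert (0 < Rmin e0 (r+1)) by (apply Rmin_glb_lt; lra).
    pose proof (Rmin_l e0 (r+1)). pose proof (Rmin_r e0 (r+1)).
    specialize (Hfar z (Hin z ltac:(unfold z; lra))).
    unfold z in Hfar. rewrite Rabs_pos_eq in Hfar by lra. lra. }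
  assert (hEX : 0 <= E * Xg) by (apply Rmult_le_pos; lra).
  intros x0 y0 z0 hx0 hy0 hz0. replace (z0 + 1) with (z0 - -1) by ring.
  revert x0 y0 z0 hx0 hy0 hz0.
  apply (avoid_ineq O (V (-1)) (V 1) (E * Xg) (-1)); [exact hEX| exact Hop|].
  intros x y z ox oy oz x1 x2 y1 y2 z1 z2. replace (z - -1) with (z + 1) by ring.
  destruct (HOS x ox) as [s [hs ex]]. destruct (HOS y oy) as [t [ht ey]].
  destruct (HOS z oz) as [u [hu ez]].
  assert (s <> -1) by (intro; subst; auto). assert (s <> 1) by (intro; subst; auto).
  assert (t <> -1) by (intro; subst; auto). assert (t <> 1) by (intro; subst; auto).
  assert (u <> -1) by (intro; subst; auto). assert (u <> 1) by (intro; subst; auto).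
  assert (Hst : Rabs (x - y) <= E * m * Rabs (s - t)).
  { subst x y. destruct (Rtotal_order s t) as [h|[h|h]].
    - pose proof (Hl s t ltac:(lra) h ltac:(lra)).
      assert (0 < m * (t - s)) by (apply Rmult_lt_0_compat; lra). rewrite Rabs_left1 by lra. rewrite (Rabs_left1 (s - t)) by lra. lra.
    - subst. replace (V t - V t) with 0 by ring. replace (t - t) with 0 by ring.
      rewrite Rabs_R0. lra.
    - pose proof (Hl t s ltac:(lra) h ltac:(lra)).
      assert (0 < m * (s - t)) by (apply Rmult_lt_0_compat; lra). rewrite Rabs_pos_eq by lra. rewrite (Rabs_pos_eq (s - t)) by lra. lra. }
  assert (Hg' : Rabs (s - t) <= Xg * (u + 1)) by (apply Hg; auto).
  assert (Hz : m * (u + 1) <= z + 1).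
  { cut (m * (u + 1) - (z + 1) <= 0); [lra|].
    apply (lim0 _ (m * (u + 1))). intros eta he.
    set (w := -1 + eta * (u + 1)).
    assert (0 < eta * (u + 1)) by (apply Rmult_lt_0_compat; lra).
    assert (eta * (u + 1) < 1 * (u + 1)) by (apply Rmult_lt_compat_r; lra).
    assert (hw : -1 < w < u) by (unfold w; split; lra).
    pose proof (Hl w u ltac:(lra) ltac:(lra) ltac:(lra)) as HL.
    pose proof (Hr w ltac:(lra)) as HR.
    assert (HW : u - w = (1 - eta) * (u + 1)) by (unfold w; ring). subst z.
    rewrite HW in HL. lra. }
  assert (0 <= m * (u + 1)) by (apply Rmult_le_pos; lra).
  rewrite (Rabs_pos_eq (z + 1)) by lra.
  assert (0 <= E * m) by (apply Rmult_le_pos; lra).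
  eapply Rle_trans; [exact Hst|].
  eapply Rle_trans; [apply Rmult_le_compat_l; [assumption| exact Hg']|].
  replace (E * m * (Xg * (u + 1))) with (E * Xg * (m * (u + 1))) by ring.
  apply Rmult_le_compat_l; assumption.
Qed.

Lemma closure_bounds a b s : set_closure (branch_interval a b) s -> a <= s <= b.
Proof.
  intros H. split.
  - destruct (Rle_or_lt a s) as [h|h]; [exact h|].
    destruct (H (a - s) ltac:(lra)) as [z [[h1 h2] h3]].
    rewrite Rabs_pos_eq in h3 by lra. lra.
  - destruct (Rle_or_lt s b) as [h|h]; [exact h|].
    destruct (H (s - b) ltac:(lra)) as [z [[h1 h2] h3]].
    rewrite Rabs_left1 in h3 by lra. lra.
Qed.

Lemma core_signed (V : R -> R) (af bf ag bg m E Xg sg rho : R) (O : R -> Prop) :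
  (sg = -1 \/ sg = 1) -> (rho = 1 \/ rho = -1) ->
  -1 <= af -> af < bf -> bf <= 1 -> (sg = -1 -> af = -1) -> (sg = 1 -> bf = 1) ->
  -1 <= ag -> ag < bg -> bg <= 1 ->
  (forall y, -1 <= y <= 1 -> af <= V y <= bf) ->
  (forall x, af <= x <= bf -> exists w, -1 <= w <= 1 /\ V w = x) ->
  0 < m -> 0 <= E ->
  (forall w u, -1 < w -> w < u -> u < 1 ->
     m * (u - w) <= (- sg * rho) * (V u - V w) <= E * m * (u - w)) ->
  0 <= Xg ->
  (~ set_closure (branch_interval ag bg) (- rho) -> forall s t u,
      ag <= s <= bg -> ag <= t <= bg -> ag <= u <= bg ->
      Rabs (s - t) <= Xg * Rabs (u - - rho)) ->
  (forall x, O x -> exists s, ag <= s <= bg /\ x = V s) ->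
  (forall x, O x -> exists e, 0 < e /\ forall y, Rabs (y - x) < e -> O y) ->
  (forall p q, (forall x, p < x < q -> exists s, ag <= s <= bg /\ x = V s) ->
      forall x, p < x < q -> O x) ->
  (exists e0, 0 < e0 /\ forall z, O z -> e0 <= Rabs (z - sg)) ->
  forall x y z, O x -> O y -> O z -> Rabs (x - y) <= E * Xg * Rabs (z - sg).
Proof.
  intros Hsg Hrho haf hab hbf Hsa Hsb hag hagb hbg Hr Hs hm hE Hl hX Hg HOS Hop HSO Hfar.
  destruct Hsg as [Hs1 | Hs1]; destruct Hrho as [Hr1 | Hr1].
  -
    specialize (Hsa Hs1). subst af.
    intros x y z ox oy oz. replace (z - sg) with (z + 1) by lra.
    apply (core V bf ag bg m E Xg O); auto.
    + intros w u h1 h2 h3. specialize (Hl w u h1 h2 h3). rewrite Hs1, Hr1 in Hl. lra.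
    + intros hc s t u hs ht hu.
      assert (hn : ~ set_closure (branch_interval ag bg) (- rho)).
      { intro hcl. apply closure_bounds in hcl. lra. }
      specialize (Hg hn s t u hs ht hu).
      assert (E1 : Rabs (u - - rho) = u + 1) by (rewrite Rabs_pos_eq; lra).
      rewrite E1 in Hg. exact Hg.
    + destruct Hfar as [e0 [h1 h2]]. exists e0. split; auto. intros z0 oz0.
      replace (z0 + 1) with (z0 - sg) by lra. auto.
  -
    specialize (Hsa Hs1). subst af.
    intros x y z ox oy oz. replace (z - sg) with (z + 1) by lra.
    apply (core (fun y => V (- y)) bf (- bg) (- ag) m E Xg O); auto; try lra.
    + intros y0 hy0. apply Hr. lra.
    + intros x0 hx0. destruct (Hs x0 hx0) as [w [hw ew]]. exists (- w).
      rewrite Ropp_involutive. split; [lra|auto].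
    + intros w u h1 h2 h3. specialize (Hl (- u) (- w) ltac:(lra) ltac:(lra) ltac:(lra)). rewrite Hs1, Hr1 in Hl. lra.
    + intros hc s t u hs ht hu.
      assert (hn : ~ set_closure (branch_interval ag bg) (- rho)).
      { intro hcl. apply closure_bounds in hcl. lra. }
      specialize (Hg hn (- s) (- t) (- u) ltac:(lra) ltac:(lra) ltac:(lra)).
      assert (E1 : Rabs (- u - - rho) = u + 1) by (rewrite Rabs_left1; lra).
      rewrite E1 in Hg.
      replace (s - t) with (- (- s - - t)) by ring. rewrite Rabs_Ropp. exact Hg.
    + intros x0 ox0. destruct (HOS x0 ox0) as [s [hs es]]. exists (- s).
      rewrite Ropp_involutive. split; [lra|auto].
    + intros p q Hpq. apply HSO. intros x0 hx0. destruct (Hpq x0 hx0) as [s [hs es]].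
      exists (- s). split; [lra|auto].
    + destruct Hfar as [e0 [h1 h2]]. exists e0. split; auto. intros z0 oz0.
      replace (z0 + 1) with (z0 - sg) by lra. auto.
  -
    specialize (Hsb Hs1). subst bf.
    intros x y z ox oy oz.
    replace (x - y) with (- ((- x) - (- y))) by ring. rewrite Rabs_Ropp.
    replace (z - sg) with (- (- z + 1)) by lra. rewrite Rabs_Ropp.
    apply (core (fun y => - V y) (- af) ag bg m E Xg (fun x => O (- x))); auto; try lra;
      try (rewrite Ropp_involutive; auto).
    + intros y0 hy0. specialize (Hr y0 hy0). lra.
    + intros x0 hx0. destruct (Hs (- x0) ltac:(lra)) as [w [hw ew]]. exists w.
      split; [lra|]. rewrite ew. ring.
    + intros w u h1 h2 h3. specialize (Hl w u h1 h2 h3). rewrite Hs1, Hr1 in Hl. lra.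
    + intros hc s t u hs ht hu.
      assert (hn : ~ set_closure (branch_interval ag bg) (- rho)).
      { intro hcl. apply closure_bounds in hcl. lra. }
      specialize (Hg hn s t u hs ht hu).
      assert (E1 : Rabs (u - - rho) = u + 1) by (rewrite Rabs_pos_eq; lra).
      rewrite E1 in Hg. exact Hg.
    + intros x0 ox0. destruct (HOS (- x0) ox0) as [s [hs es]]. exists s.
      split; [lra|]. rewrite <- es. ring.
    + intros x0 ox0. destruct (Hop (- x0) ox0) as [e [he H]]. exists e. split; auto.
      intros y0 hy0. apply H. replace (- y0 - - x0) with (- (y0 - x0)) by ring.
      rewrite Rabs_Ropp. exact hy0.
    + intros p q Hpq x0 hx0. apply (HSO (- q) (- p)); [|lra].
      intros x1 hx1. destruct (Hpq (- x1) ltac:(lra)) as [s [hs es]].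
      exists s. split; [lra|]. lra.
    + destruct Hfar as [e0 [h1 h2]]. exists e0. split; auto. intros z0 oz0.
      specialize (h2 _ oz0). replace (z0 + 1) with (- (- z0 - sg)) by lra.
      rewrite Rabs_Ropp. exact h2.
  -
    specialize (Hsb Hs1). subst bf.
    intros x y z ox oy oz.
    replace (x - y) with (- ((- x) - (- y))) by ring. rewrite Rabs_Ropp.
    replace (z - sg) with (- (- z + 1)) by lra. rewrite Rabs_Ropp.
    apply (core (fun y => - V (- y)) (- af) (- bg) (- ag) m E Xg (fun x => O (- x))); auto; try lra;
      try (rewrite Ropp_involutive; auto).
    + intros y0 hy0. specialize (Hr (- y0) ltac:(lra)). lra.
    + intros x0 hx0. destruct (Hs (- x0) ltac:(lra)) as [w [hw ew]]. exists (- w).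
      split; [lra|]. rewrite Ropp_involutive, ew. ring.
    + intros w u h1 h2 h3. specialize (Hl (- u) (- w) ltac:(lra) ltac:(lra) ltac:(lra)). rewrite Hs1, Hr1 in Hl. lra.
    + intros hc s t u hs ht hu.
      assert (hn : ~ set_closure (branch_interval ag bg) (- rho)).
      { intro hcl. apply closure_bounds in hcl. lra. }
      specialize (Hg hn (- s) (- t) (- u) ltac:(lra) ltac:(lra) ltac:(lra)).
      assert (E1 : Rabs (- u - - rho) = u + 1) by (rewrite Rabs_left1; lra).
      rewrite E1 in Hg.
      replace (s - t) with (- (- s - - t)) by ring. rewrite Rabs_Ropp. exact Hg.
    + intros x0 ox0. destruct (HOS (- x0) ox0) as [s [hs es]]. exists (- s).
      split; [lra|]. rewrite Ropp_involutive, <- es. ring.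
    + intros x0 ox0. destruct (Hop (- x0) ox0) as [e [he H]]. exists e. split; auto.
      intros y0 hy0. apply H. replace (- y0 - - x0) with (- (y0 - x0)) by ring.
      rewrite Rabs_Ropp. exact hy0.
    + intros p q Hpq x0 hx0. apply (HSO (- q) (- p)); [|lra].
      intros x1 hx1. destruct (Hpq (- x1) ltac:(lra)) as [s [hs es]].
      exists (- s). split; [lra|]. lra.
    + destruct Hfar as [e0 [h1 h2]]. exists e0. split; auto. intros z0 oz0.
      specialize (h2 _ oz0). replace (z0 + 1) with (- (- z0 - sg)) by lra.
      rewrite Rabs_Ropp. exact h2.
Qed.

Lemma exp_le_mono a b : a <= b -> exp a <= exp b.
Proof. intros [h|h]; [left; apply exp_increasing; exact h| right; subst; reflexivity]. Qed.

Lemma bilip (V : R -> R) (C1 : R) :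
  (forall y, -1 < y < 1 -> ex_derive V y /\ ex_derive (Derive V) y /\
      Derive V y <> 0 /\ Rabs (Derive (Derive V) y / Derive V y) <= C1) ->
  exists s2 m, (s2 = 1 \/ s2 = -1) /\ 0 < m /\
    forall w u, -1 < w -> w < u -> u < 1 ->
      m * (u - w) <= s2 * (V u - V w) <= exp (2 * C1) * m * (u - w).
Proof.
  intros H.
  set (D := Derive V).
  assert (Hc : forall a, -1 < a < 1 -> continuity_pt D a).
  { intros a ha. apply continuity_pt_filterlim. apply (@ex_derive_continuous R_AbsRing R_NormedModule D a).
    apply (H a ha). }
  assert (Hnz : forall a, -1 < a < 1 -> D a <> 0) by (intros a ha; apply (H a ha)).
  assert (Hpos : forall p q, -1 < p < 1 -> -1 < q < 1 -> D p < 0 -> 0 < D q -> False).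
  { intros p q hp hq h1 h2.
    destruct (Rtotal_order p q) as [hpq|[hpq|hpq]].
    - destruct (Ranalysis5.IVT_interv D p q) as [z [hz ez]]; auto.
      + intros a ha. apply Hc. lra.
      + apply (Hnz z); [lra|auto].
    - subst. lra.
    - destruct (Ranalysis5.IVT_interv (fun x => - D x) q p) as [z [hz ez]]; auto; try lra.
      + intros a ha. apply (continuity_pt_opp D). apply Hc. lra.
      + apply (Hnz z); [lra|lra]. }
  set (s2 := if Rlt_dec 0 (D 0) then 1 else -1).
  set (P := fun y => s2 * D y).
  assert (HP : forall y, -1 < y < 1 -> 0 < P y).
  { intros y hy. unfold P, s2. destruct (Rlt_dec 0 (D 0)) as [h|h].
    - destruct (Rlt_or_le 0 (D y)) as [h'|h']; [lra|].
      exfalso. apply (Hpos y 0); auto; try lra. destruct h'; auto. exfalso; apply (Hnz y); auto.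
    - assert (D 0 < 0) by (destruct (Rle_or_lt 0 (D 0)) as [[h1|h1]|h1]; [lra| exfalso; apply (Hnz 0); [lra|auto]| lra]).
      destruct (Rlt_or_le (D y) 0) as [h'|h']; [lra|].
      exfalso. apply (Hpos 0 y); auto; try lra. destruct h'; auto. exfalso; apply (Hnz y); auto. }
  assert (Hs2 : s2 = 1 \/ s2 = -1) by (unfold s2; destruct (Rlt_dec 0 (D 0)); auto).
  assert (Hder : forall c, -1 < c < 1 ->
     derivable_pt_lim (fun y => ln (P y)) c (s2 * Derive D c * / P c)).
  { intros c hc. apply is_derive_Reals.
    apply (is_derive_comp ln P c). 
    - apply is_derive_ln. apply HP; auto.
    - unfold P. apply is_derive_scal. apply Derive_correct. apply (H c hc). }
  assert (Hbd : forall c, -1 < c < 1 -> Rabs (s2 * Derive D c * / P c) <= C1).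
  { intros c hc. unfold P. replace (s2 * Derive D c * / (s2 * D c)) with (Derive D c / D c).
    - apply (H c hc).
    - field. split; [apply Hnz; auto| destruct Hs2; lra]. }
  assert (Hlog : forall xi, -1 < xi < 1 -> Rabs (ln (P xi) - ln (P 0)) <= C1).
  { intros xi hxi.
    assert (C1 >= 0) by (pose proof (Hbd 0 ltac:(lra)); pose proof (Rabs_pos (s2 * Derive D 0 * / P 0)); lra).
    destruct (Rtotal_order xi 0) as [h|[h|h]].
    - destruct (MVT_cor2 (fun y => ln (P y)) (fun c => s2 * Derive D c * / P c) xi 0 h)
        as [c [ec hc]].
      + intros c hc. apply Hder. lra.
      + rewrite <- Rabs_Ropp. replace (- (ln (P xi) - ln (P 0))) with (ln (P 0) - ln (P xi)) by ring.
        rewrite ec, Rabs_mult. rewrite (Rabs_pos_eq (0 - xi)) by lra.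
        pose proof (Hbd c ltac:(lra)). pose proof (Rabs_pos (s2 * Derive D c * / P c)). nra.
    - subst. replace (ln (P 0) - ln (P 0)) with 0 by ring. rewrite Rabs_R0. lra.
    - destruct (MVT_cor2 (fun y => ln (P y)) (fun c => s2 * Derive D c * / P c) 0 xi h)
        as [c [ec hc]].
      + intros c hc. apply Hder. lra.
      + rewrite ec, Rabs_mult. rewrite (Rabs_pos_eq (xi - 0)) by lra.
        pose proof (Hbd c ltac:(lra)). pose proof (Rabs_pos (s2 * Derive D c * / P c)). nra. }
  assert (P0 : 0 < P 0) by (apply HP; lra).
  assert (Hup : forall xi, -1 < xi < 1 -> P xi <= P 0 * exp C1).
  { intros xi hxi. pose proof (Hlog xi hxi) as hl. apply Rabs_le_between in hl.
    rewrite <- (exp_ln (P xi)) by (apply HP; auto). rewrite <- (exp_ln (P 0)) by auto.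
    rewrite <- exp_plus. apply exp_le_mono. lra. }
  assert (Hlo : forall xi, -1 < xi < 1 -> P 0 * exp (- C1) <= P xi).
  { intros xi hxi. pose proof (Hlog xi hxi) as hl. apply Rabs_le_between in hl.
    rewrite <- (exp_ln (P xi)) by (apply HP; auto). rewrite <- (exp_ln (P 0)) by auto.
    rewrite <- exp_plus. apply exp_le_mono. lra. }
  exists s2, (P 0 * exp (- C1)). split; [exact Hs2|]. split.
  { apply Rmult_lt_0_compat; [auto| apply exp_pos]. }
  intros w u hw hwu hu.
  destruct (MVT_cor2 V D w u hwu) as [c [ec hc]].
  { intros c hc. apply is_derive_Reals. apply Derive_correct. apply (H c). lra. }
  rewrite ec.
  replace (s2 * (D c * (u - w))) with (P c * (u - w)) by (unfold P; ring).
  replace (exp (2 * C1) * (P 0 * exp (- C1)) * (u - w)) with (P 0 * exp C1 * (u - w)).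
  2:{ replace (2 * C1) with (C1 + C1) by ring. rewrite exp_plus.
      replace (exp C1 * exp C1 * (P 0 * exp (- C1))) with (P 0 * exp C1 * (exp C1 * exp (- C1))) by ring.
      rewrite <- exp_plus. replace (C1 + - C1) with 0 by ring. rewrite exp_0. ring. }
  split; apply Rmult_le_compat_r; try lra; [apply Hlo| apply Hup]; lra.
Qed.

Theorem lemma6
  (If : Type) (af bf : If -> R) (f : R -> R) (fhat vf : If -> R -> R)
  (Ig : Type) (ag bg : Ig -> R) (g : R -> R) (ghat vg : Ig -> R -> R) :
  FBM If af bf f fhat vf ->
  FBM Ig ag bg g ghat vg ->
  spacing_P If (fun i => branch_interval (af i) (bf i)) ->
  spacing_P Ig (fun i => branch_interval (ag i) (bg i)) ->
  bounded_distortion If vf ->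
  uniformly_expanding Ig ag bg g ->
  spacing_P (If * Ig) (comp_branches If Ig vf vg).
Proof.
  intros HF HG HPf HPg HD _.
  destruct HF as [_ [Hfi [_ [_ [_ [_ [Hfr [Hfinj Hfv]]]]]]]].
  destruct HG as [_ [Hgi [_ [_ [_ [_ [Hgr [Hginj Hgv]]]]]]]].
  destruct HPf as [Xf HXf]. destruct HPg as [Xg HXg]. destruct HD as [C1 HC1].
  exists (Rabs Xf + exp (2 * C1) * Rabs Xg).
  intros [phi gam] sg Hsg Hncl x y z Ox Oy Oz.
  unfold comp_branches in *. simpl in *.
  set (T := fun x : R => exists y : R, -1 <= y <= 1 /\ x = vf phi (vg gam y)) in *.
  set (O := set_interior T) in *.
  pose proof (Hfi phi) as hfi. pose proof (Hgi gam) as hgi.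
  assert (HSeq : forall x, T x <-> exists s, ag gam <= s <= bg gam /\ x = vf phi s).
  { intros x0. split.
    - intros [y0 [hy0 e]]. exists (vg gam y0). split; [apply (Hgv gam y0 hy0)| exact e].
    - intros [s [hs e]]. exists (ghat gam s). split; [apply (Hgr gam s hs)|].
      rewrite e. f_equal. symmetry. apply (Hginj gam); auto.
      + apply (Hgv gam). apply (Hgr gam s hs).
      + apply (Hgv gam). apply (Hgr gam s hs). }
  assert (HOS : forall x, O x -> exists s, ag gam <= s <= bg gam /\ x = vf phi s).
  { intros x0 [e [he H]]. apply HSeq. apply H. replace (x0 - x0) with 0 by ring.
    rewrite Rabs_R0. exact he. }
  assert (HOab : forall x, O x -> af phi <= x <= bf phi).
  { intros x0 ox0. destruct (HOS x0 ox0) as [s [hs e]]. subst x0.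
    apply (Hfv phi s). lra. }
  assert (Hxi : 0 <= exp (2 * C1) * Rabs Xg) by (apply Rmult_le_pos; [left; apply exp_pos| apply Rabs_pos]).
  assert (Hz0 : 0 <= Rabs (z - sg)) by apply Rabs_pos.
  destruct (classic (set_closure (branch_interval (af phi) (bf phi)) sg)) as [Hcl|Hcl].
  - apply closure_bounds in Hcl.
    destruct (bilip (vf phi) C1 (HC1 phi)) as [s2 [m [Hs2 [hm Hl]]]].
    set (rho := - sg * s2).
    assert (Hrho : rho = 1 \/ rho = -1).
    { unfold rho. destruct Hsg as [e1|e1]; destruct Hs2 as [e2|e2]; rewrite e1, e2;
      [left|right|right|left]; ring. }
    assert (Hsr : - sg * rho = s2).
    { unfold rho. destruct Hsg as [e1|e1]; rewrite e1; ring. }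
    assert (Hmain : Rabs (x - y) <= exp (2 * C1) * Rabs Xg * Rabs (z - sg)).
    { apply (core_signed (vf phi) (af phi) (bf phi) (ag gam) (bg gam) m (exp (2 * C1))
               (Rabs Xg) sg rho O); auto; try lra.
      - intros y0 hy0. apply (Hfv phi y0 hy0).
      - intros x0 hx0. exists (fhat phi x0). split; [apply (Hfr phi x0 hx0)|].
        apply (Hfinj phi); auto.
        + apply (Hfv phi). apply (Hfr phi x0 hx0).
        + apply (Hfv phi). apply (Hfr phi x0 hx0).
      - left; apply exp_pos.
      - rewrite Hsr. exact Hl.
      - apply Rabs_pos.
      - intros hn. apply (spc_closed_ext (ag gam) (bg gam) Xg (- rho)); [lra|].
        intros x0 y0 z0 hx0 hy0 hz0. apply (HXg gam (- rho)); auto.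
        destruct Hrho as [e|e]; rewrite e; [left|right]; ring.
      - intros x0 [e [he H]]. exists e. split; auto. intros y0 hy0.
        exists (e - Rabs (y0 - x0)). split; [lra|]. intros y1 hy1. apply H.
        replace (y1 - x0) with ((y1 - y0) + (y0 - x0)) by ring.
        eapply Rle_lt_trans; [apply Rabs_triang|]. lra.
      - intros p q Hpq x0 hx0. exists (Rmin (x0 - p) (q - x0)).
        split; [apply Rmin_glb_lt; lra|]. intros y0 hy0.
        pose proof (Rmin_l (x0 - p) (q - x0)). pose proof (Rmin_r (x0 - p) (q - x0)).
        apply HSeq. apply Hpq. apply Rabs_def2 in hy0. lra.
      - destruct (classic (exists e0, 0 < e0 /\ forall z, O z -> e0 <= Rabs (z - sg))) as [h|h];
          [exact h|]. exfalso. apply Hncl. intros eps heps.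
        apply NNPP. intro hne. apply h. exists eps. split; auto. intros z0 oz0.
        destruct (Rle_or_lt eps (Rabs (z0 - sg))) as [h1|h1]; auto.
        exfalso. apply hne. exists z0. split; auto. }
    eapply Rle_trans; [exact Hmain|]. apply Rmult_le_compat_r; [exact Hz0|].
    pose proof (Rabs_pos Xf). lra.
  - pose proof (spc_closed_ext (af phi) (bf phi) Xf sg ltac:(lra)
      (fun x y z hx hy hz => HXf phi sg Hsg Hcl x y z hx hy hz) x y z
      (HOab x Ox) (HOab y Oy) (HOab z Oz)) as H1.
    eapply Rle_trans; [exact H1|]. apply Rmult_le_compat_r; [exact Hz0|]. lra.
Qed.
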